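(* Let $\mathscr H$ be a complex Hilbert space and $\mathbf{T}=(T_1,\dots,T_d)\in\mathbb{B}(\mathscr H)^d$. Then $$\frac{1}{d}\,w_e(\mathbf{T}^2)\le w_e^2(\mathbf{T}).$$
   Context: $\mathbb{B}(\mathscr H)$ denotes the bounded linear operators on $\mathscr H$. For a $d$-tuple $\mathbf{T}=(T_1,\dots,T_d)\in\mathbb{B}(\mathscr H)^d$, the Euclidean operator radius is $w_e(\mathbf{T})=\sup\{(\sum_{k=1}^d|\langle T_kx,x\rangle|^2)^{1/2}: x\in\mathscr H,\ \|x\|=1\}$. Powers are componentwise: $\mathbf{T}^n=(T_1^n,\dots,T_d^n)$. *)

(* Defs.v *)
From HB Require Import structures.
From mathcomp Require Import all_boot all_order all_algebra.
From mathcomp Require Import complex.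
From mathcomp Require Import all_classical all_reals.
Set Implicit Arguments. Unset Strict Implicit. Unset Printing Implicit Defensive.
Import Order.TTheory GRing.Theory Num.Theory.
Local Open Scope ring_scope.
Local Open Scope classical_set_scope.

Section Hilbert.
Variable R : realType.
Variable V : lmodType R[i].
Variable ip : V -> V -> R[i].

Definition is_inner_product : Prop :=
  [/\ (forall (a : R[i]) (x y z : V), ip (a *: x + y) z = a * ip x z + ip y z),
      (forall x y : V, ip y x = conjc (ip x y)),
      (forall x : V, 0 <= ip x x) &
      (forall x : V, ip x x = 0 -> x = 0)].

Definition ipnorm (x : V) : R := Num.sqrt (complex.Re (ip x x)).

Definition ip_complete : Prop :=
  forall u : nat -> V,
    (forall e : R, 0 < e -> exists N : nat, forall m n : nat,
        (N <= m)%N -> (N <= n)%N -> ipnorm (u m - u n) < e) ->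
    exists l : V, forall e : R, 0 < e -> exists N : nat, forall n : nat,
        (N <= n)%N -> ipnorm (u n - l) < e.

Definition is_Hilbert : Prop := is_inner_product /\ ip_complete.

Definition bounded_op (A : V -> V) : Prop :=
  exists M : R, forall x : V, ipnorm (A x) <= M * ipnorm x.

End Hilbert.

Definition cabs2 (R : realType) (z : R[i]) : R := complex.Re z ^+ 2 + complex.Im z ^+ 2.

Definition euclid_radius (R : realType) (V : lmodType R[i]) (ip : V -> V -> R[i])
    (d : nat) (T : 'I_d -> V -> V) : R :=
  sup [set r : R | exists x : V, ipnorm ip x = 1 /\
         r = Num.sqrt (\sum_(k < d) cabs2 (ip (T k x) x))].

Definition tuple_sq (V : Type) (d : nat) (T : 'I_d -> V -> V) : 'I_d -> V -> V :=
  fun k x => T k (T k x).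

(* Main.v *)
Require Import Defs.
From HB Require Import structures.
From mathcomp Require Import all_boot all_order all_algebra.
From mathcomp Require Import complex.
From mathcomp Require Import all_classical all_reals.
From mathcomp Require Import ring lra.
Import Order.TTheory GRing.Theory Num.Theory.
Local Open Scope ring_scope.
Local Open Scope complex_scope.
Notation RE := complex.Re.
Notation IM := complex.Im.
Lemma ReM {R : rcfType} (x y : R[i]) : RE (x * y) = RE x * RE y - IM x * IM y.
Proof. by case: x => a b; case: y => c d; simpc. Qed.
Lemma ImM {R : rcfType} (x y : R[i]) : IM (x * y) = RE x * IM y + IM x * RE y.
Proof. by case: x => a b; case: y => c d; simpc. Qed.
Lemma Re_le {R : realType} (w : R[i]) (B : R) : 0 <= B -> cabs2 w <= B^+2 -> RE w <= B.
Proof. rewrite /cabs2 => hB h. nra. Qed.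
Lemma cabs2_ge0 {R : realType} (w : R[i]) : 0 <= cabs2 w.
Proof. rewrite /cabs2; nra. Qed.
Lemma cabs2M {R : realType} (x y : R[i]) : cabs2 (x * y) = cabs2 x * cabs2 y.
Proof. rewrite /cabs2 ReM ImM; ring. Qed.
Lemma cabs2N {R : realType} (x : R[i]) : cabs2 (- x) = cabs2 x.
Proof. by case: x => a b; rewrite /cabs2 /= !sqrrN. Qed.
Lemma cabs21 {R : realType} : cabs2 (1 : R[i]) = 1.
Proof. by rewrite /cabs2 /= expr0n /= addr0 expr1n. Qed.

Lemma L1 {R : realType} (z : R[i]) (B : R) :
  (forall c : R[i], cabs2 c = 1 -> RE (c * z) <= B) -> cabs2 z <= B ^+ 2.
Proof.
move=> H.
have h1 := H 1 cabs21. have h2 := H (-1) ltac:(by rewrite cabs2N cabs21).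
rewrite mul1r in h1. rewrite mulN1r in h2.
have hB : 0 <= B.
  move: h1 h2; case: z {H} => a b /= h1 h2; lra.
case: z H h1 h2 => a b H h1 h2.
rewrite /cabs2 /=.
set s := Num.sqrt (a ^+ 2 + b ^+ 2).
have hs0 : 0 <= a ^+ 2 + b ^+ 2 by nra.
have hs2 : s ^+ 2 = a ^+ 2 + b ^+ 2 by rewrite sqr_sqrtr.
have hs : 0 <= s by rewrite sqrtr_ge0.
have [s0|sn0] := eqVneq s 0.
  rewrite -hs2 s0 expr0n /=; nra.
have sp : 0 < s by rewrite lt_neqAle eq_sym sn0 hs.
have := H (Complex (a / s) (- b / s)).
rewrite /cabs2 /=.
have e1 : (a / s) ^+ 2 + (- b / s) ^+ 2 = 1.
  by rewrite !expr_div_n sqrrN -mulrDl -hs2 divff // expf_neq0.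
move=> /(_ e1).
have -> : a / s * a - - b / s * b = s.
  have -> : a / s * a - - b / s * b = s ^+ 2 / s.
    by rewrite hs2; field; exact: lt0r_neq0 sp.
  by rewrite expr2 mulfK // lt0r_neq0.
move=> hsB. rewrite -hs2. nra.
Qed.

Lemma L2 {R : realType} (z : R[i]) (B : R) :
  (forall c : R[i], cabs2 c = 1 -> RE (c ^+ 2 * z) <= B) -> cabs2 z <= B ^+ 2.
Proof.
move=> H; apply: L1 => u hu.
have := H (sqrtc u); rewrite sqr_sqrtc; apply.
have e : cabs2 (sqrtc u) ^+ 2 = 1 by rewrite expr2 -cabs2M -expr2 sqr_sqrtc.
have g := cabs2_ge0 (sqrtc u).
move: e g; set t := cabs2 _ => e g; nra.
Qed.

Set Implicit Arguments.
Section IP.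
Variables (R : realType) (V : lmodType R[i]) (ip : V -> V -> R[i]).
Hypothesis Hip : is_inner_product ip.

Lemma ipL a x y z : ip (a *: x + y) z = a * ip x z + ip y z.
Proof. by case: Hip. Qed.
Lemma ipC x y : ip y x = conjc (ip x y).
Proof. by case: Hip. Qed.
Lemma ip_ge0 x : 0 <= ip x x.
Proof. by case: Hip. Qed.
Lemma ip_eq0 x : ip x x = 0 -> x = 0.
Proof. by case: Hip => _ _ _; apply. Qed.

Lemma ip0l z : ip 0 z = 0.
Proof.
have := ipL 1 0 0 z; rewrite scaler0 addr0 mul1r => /(congr1 (fun t => t - ip 0 z)); rewrite subrr addrK => h; by rewrite -h.
Qed.
Lemma ipDl x y z : ip (x + y) z = ip x z + ip y z.
Proof. by have := ipL 1 x y z; rewrite scale1r mul1r. Qed.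
Lemma ipZl a x z : ip (a *: x) z = a * ip x z.
Proof. by rewrite -[a *: x]addr0 ipL ip0l addr0. Qed.
Lemma ipNl x z : ip (- x) z = - ip x z.
Proof. by rewrite -scaleN1r ipZl mulN1r. Qed.
Lemma ipBl x y z : ip (x - y) z = ip x z - ip y z.
Proof. by rewrite ipDl ipNl. Qed.
Lemma ipDr x y z : ip z (x + y) = ip z x + ip z y.
Proof. by rewrite ipC ipDl rmorphD /= -!ipC. Qed.
Lemma ipZr a x z : ip z (a *: x) = conjc a * ip z x.
Proof. by rewrite ipC ipZl rmorphM /= -ipC. Qed.
Lemma ipNr x z : ip z (- x) = - ip z x.
Proof. by rewrite ipC ipNl rmorphN /= -ipC. Qed.
Lemma ipBr x y z : ip z (x - y) = ip z x - ip z y.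
Proof. by rewrite ipDr ipNr. Qed.
Lemma ip0r z : ip z 0 = 0.
Proof. by rewrite ipC ip0l rmorph0. Qed.

Lemma ip_real x : ip x x = (RE (ip x x))%:C.
Proof.
have := ip_ge0 x; rewrite lecE /= => /andP [/eqP h _].
by move: h; case: (ip x x) => a b /= ->.
Qed.
Lemma Reip_ge0 x : 0 <= RE (ip x x).
Proof. by have := ip_ge0 x; rewrite lecE /= => /andP [_ ->]. Qed.

Lemma ipnorm1 x : ipnorm ip x = 1 -> ip x x = 1.
Proof.
rewrite /ipnorm => h.
have : RE (ip x x) = 1 by rewrite -(sqr_sqrtr (Reip_ge0 x)) h expr1n.
by rewrite ip_real => ->.
Qed.
End IP.
Unset Implicit Arguments.

Lemma ReCM {R : realType} (k : R) (w : R[i]) : RE (k%:C * w) = k * RE w.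
Proof. by rewrite ReM /= mul0r subr0. Qed.

Lemma hom {R : realType} (V : lmodType R[i]) (ip : V -> V -> R[i])
  (Hip : is_inner_product ip) (T : {linear V -> V}) (W : R) : 0 <= W ->
  (forall x, ipnorm ip x = 1 -> cabs2 (ip (T x) x) <= W ^+ 2) ->
  forall u c, cabs2 c = 1 -> RE (c * ip (T u) u) <= W * RE (ip u u).
Proof.
move=> hW Hb u c hc.
have hp := Reip_ge0 Hip u.
have [p0|pn0] := eqVneq (RE (ip u u)) 0.
  have u0 : u = 0.
    apply: (ip_eq0 Hip); rewrite (ip_real Hip u); set t := RE _; have ->: t = 0 := p0; exact: rmorph0.
  by rewrite u0 linear0 (ip0l Hip) mulr0 /= mulr0.
have pp : 0 < RE (ip u u) by rewrite lt_neqAle eq_sym pn0 hp.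
set p := RE (ip u u) in hp pn0 pp *.
set n := Num.sqrt p.
have np : 0 < n by rewrite sqrtr_gt0.
have n2 : n ^+ 2 = p by rewrite sqr_sqrtr.
set k := n^-1.
have k2 : k * k * p = 1 by rewrite /k -n2 expr2; field; exact: lt0r_neq0.
set v := k%:C *: u.
have ipvv : ip v v = (k * k * p)%:C.
  rewrite /v (ipZl Hip) (ipZr Hip) conjc_real (ip_real Hip) -/p.
  by rewrite !rmorphM /= mulrA.
have hv : ipnorm ip v = 1 by rewrite /ipnorm ipvv k2 /= sqrtr1.
have := Hb v hv.
rewrite /v linearZ /= (ipZl Hip) (ipZr Hip) conjc_real mulrA -rmorphM /=.
move=> h.
have h' : cabs2 (c * ((k * k)%:C * ip (T u) u)) <= W ^+ 2 by rewrite cabs2M hc mul1r.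
have := Re_le _ _ hW h'; rewrite mulrCA ReCM.
move: k2; set q := k * k; set a := RE _ => k2 h3.
have -> : a = p * (q * a) by rewrite mulrA (mulrC p) k2 mul1r.
rewrite (mulrC W); exact: ler_wpM2l.
Qed.

Lemma ReD {R : realType} (x y : R[i]) : RE (x + y) = RE x + RE y.
Proof. by case: x => a b; case: y => c d. Qed.
Lemma ReN {R : realType} (x : R[i]) : RE (- x) = - RE x.
Proof. by case: x => a b. Qed.
Lemma ReB {R : realType} (x y : R[i]) : RE (x - y) = RE x - RE y.
Proof. by rewrite ReD ReN. Qed.

Lemma power (R : realType) (V : lmodType R[i]) (ip : V -> V -> R[i])
  (Hip : is_inner_product ip) (T : {linear V -> V}) (W : R) : 0 < W ->
  (forall x, ipnorm ip x = 1 -> cabs2 (ip (T x) x) <= W ^+ 2) ->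
  forall x, ipnorm ip x = 1 -> cabs2 (ip (T (T x)) x) <= (W ^+ 2) ^+ 2.
Proof.
move=> hW Hb x hx.
have H := @hom R V ip Hip T W (ltW hW) Hb.
have ixx := ipnorm1 Hip x hx.
apply: L2 => c hc.
set w : R[i] := W%:C.
set yp := w *: x + c *: T x.
set ym := w *: x - c *: T x.
set Q := (w * w) *: x - c ^+ 2 *: T (T x).
have TD : forall u v, T (u + v) = T u + T v by move=> u v; exact: linearD.
have TB : forall u v, T (u - v) = T u - T v by move=> u v; exact: linearB.
have TZ : forall (a : R[i]) u, T (a *: u) = a *: T u by move=> a u; exact: linearZ.
have e1 : w *: yp - c *: T yp = Q.
  rewrite /yp /Q TD !TZ !scalerDr !scalerA opprD addrA.
  by rewrite (mulrC w c) addrK expr2.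
have e2 : w *: ym + c *: T ym = Q.
  rewrite /ym /Q TB !TZ !scalerBr !scalerA addrA.
  by rewrite (mulrC w c) subrK expr2.
have e3 : yp + ym = (w + w) *: x.
  by rewrite /yp /ym addrACA subrr addr0 scalerDl.
have h1 : 0 <= RE (ip (w *: yp - c *: T yp) yp).
  rewrite (ipBl Hip) !(ipZl Hip) ReB ReCM subr_ge0; exact: H.
have h2 : 0 <= RE (ip (w *: ym + c *: T ym) ym).
  rewrite (ipDl Hip) !(ipZl Hip) ReD ReCM.
  have := H ym (- c); rewrite cabs2N => /(_ hc); rewrite mulNr ReN.
  move=> h; lra.
rewrite e1 in h1; rewrite e2 in h2.
have := addr_ge0 h1 h2.
rewrite -ReD -(ipDr Hip) e3 (ipZr Hip) /Q (ipBl Hip) !(ipZl Hip) ixx mulr1.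
rewrite /w -rmorphD conjc_real -rmorphM ReCM ReB /=.
set a := RE _.
move=> h.
have h4 : 0 <= W * W - a by rewrite -(pmulr_rge0 _ (addr_gt0 hW hW)).
rewrite expr2; lra.
Qed.

Lemma Re_conj {R : realType} (z : R[i]) : RE (conjc z) = RE z.
Proof. by case: z. Qed.
Lemma conj_mul_self {R : realType} (c : R[i]) : conjc c * c = (cabs2 c)%:C.
Proof.
case: c => a b; rewrite /cabs2 /=; simpc.
by rewrite -!expr2 (mulrC b a) subrr.
Qed.

Lemma csl (R : realType) (V : lmodType R[i]) (ip : V -> V -> R[i])
  (Hip : is_inner_product ip) (a b : V) :
  cabs2 (ip a b) <= ((RE (ip a a) + RE (ip b b)) / 2) ^+ 2.
Proof.
apply: L1 => c hc.
have := Reip_ge0 Hip (a - (conjc c) *: b).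
rewrite !(ipBl Hip) !(ipBr Hip) !(ipZl Hip) !(ipZr Hip) conjcK.
rewrite (ipC Hip b a) mulrA conj_mul_self hc rmorph1 mul1r.
rewrite !ReB.
have -> : RE (c^*%C * ip b a) = RE (c * (ip b a)^*%C).
  by rewrite -Re_conj rmorphM /= conjcK.
move=> h; lra.
Qed.

Lemma unit_bound (R : realType) (V : lmodType R[i]) (ip : V -> V -> R[i])
  (Hip : is_inner_product ip) (A : V -> V) (M : R) :
  (forall x, ipnorm ip (A x) <= M * ipnorm ip x) ->
  forall x, ipnorm ip x = 1 -> cabs2 (ip (A x) x) <= ((M ^+ 2 + 1) / 2) ^+ 2.
Proof.
move=> HM x hx.
apply: le_trans (csl _ _ _ Hip (A x) x) _.
have := HM x; rewrite hx mulr1 => hA.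
have e : RE (ip (A x) (A x)) = ipnorm ip (A x) ^+ 2.
  by rewrite /ipnorm sqr_sqrtr // Reip_ge0.
have n0 : 0 <= ipnorm ip (A x) by rewrite /ipnorm sqrtr_ge0.
rewrite (ipnorm1 Hip x hx) e /=.
have h1 : ipnorm ip (A x) ^+ 2 <= M ^+ 2 by rewrite lerXn2r // ?nnegrE //; exact: le_trans hA.
have h2 : 0 <= (ipnorm ip (A x) ^+ 2 + 1) / 2.
  by apply: divr_ge0 => //; apply: addr_ge0 => //; exact: sqr_ge0.
rewrite lerXn2r // ?nnegrE //; first lra.
lra.
Qed.

Theorem corollary2p3 (R : realType) (V : lmodType R[i]) (ip : V -> V -> R[i])
    (HV : is_Hilbert ip) (d : nat) (T : 'I_d -> {linear V -> V})
    (HT : forall k : 'I_d, bounded_op ip (T k)) :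
  (d%:R)^-1 * euclid_radius ip (tuple_sq (fun k => (T k : V -> V)))
    <= (euclid_radius ip (fun k => (T k : V -> V))) ^+ 2.
Proof.
have Hip := HV.1.
rewrite /euclid_radius /tuple_sq.
set E2 := [set r : R | _]%classic.
set E1 := [set r : R | _]%classic.
have [d0|dpos] := leqP d 0.
  have -> : (d%:R : R) = 0 by apply/eqP; rewrite pnatr_eq0 -leqn0.
  by rewrite invr0 mul0r sqr_ge0.
have dR : (1 : R) <= d%:R by rewrite ler1n.
case: (choice HT) => M HM.
have ub1 : ubound E1 (Num.sqrt (\sum_(k < d) ((M k ^+ 2 + 1) / 2) ^+ 2)).
  move=> r [x [hx ->]].
  rewrite ler_sqrt; last by apply: sumr_ge0 => k _; exact: sqr_ge0.
  apply: ler_sum => k _.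
  exact: (unit_bound _ _ _ Hip (T k) (M k) (HM k) x hx).
have hub1 : has_ubound E1 by exists (Num.sqrt (\sum_(k < d) ((M k ^+ 2 + 1) / 2) ^+ 2)).
set W := sup E1.
have W0 : 0 <= W.
  case: (pselect (E1 !=set0)%classic) => [[r Er]|ne].
    apply: le_trans (ub_le_sup hub1 Er).
    by case: Er => x [_ ->]; exact: sqrtr_ge0.
  by rewrite /W sup_out // => -[].
have hW1 : forall k x, ipnorm ip x = 1 -> cabs2 (ip (T k x) x) <= W ^+ 2.
  move=> k x hx.
  set S := \sum_(j < d) cabs2 (ip (T j x) x).
  have S0 : 0 <= S by apply: sumr_ge0 => j _; exact: cabs2_ge0.
  have hS : Num.sqrt S <= W by apply: ub_le_sup => //; exists x.
  have : S <= W ^+ 2.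
    rewrite -(sqr_sqrtr S0) lerXn2r // ?nnegrE //; exact: sqrtr_ge0.
  apply: le_trans.
  by rewrite /S (bigD1 k) //= lerDl; apply: sumr_ge0 => j _; exact: cabs2_ge0.
have key : forall e : R, 0 < e -> sup E2 <= d%:R * (W + e) ^+ 2.
  move=> e he.
  have We : 0 < W + e by apply: lt_le_trans he _; rewrite lerDr.
  have hb : forall k x, ipnorm ip x = 1 -> cabs2 (ip (T k x) x) <= (W + e) ^+ 2.
    move=> k x hx; apply: le_trans (hW1 k x hx) _.
    by rewrite lerXn2r // ?nnegrE ?lerDl ?ltW.
  have B0 : 0 <= d%:R * (W + e) ^+ 2.
    by apply: mulr_ge0; [exact: ler0n | exact: sqr_ge0].
  have ub2 : ubound E2 (d%:R * (W + e) ^+ 2).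
    move=> r [x [hx ->]].
    have h1 : \sum_(k < d) cabs2 (ip (T k (T k x)) x) <= d%:R * ((W + e) ^+ 2) ^+ 2.
      apply: le_trans (_ : \sum_(k < d) ((W + e) ^+ 2) ^+ 2 <= _).
        apply: ler_sum => k _.
        exact: (power _ _ _ Hip (T k) (W + e) We (hb k) x hx).
      by rewrite sumr_const card_ord mulr_natl.
    rewrite -(ger0_norm B0) -sqrtr_sqr ler_sqrt; last exact: sqr_ge0.
    apply: le_trans h1 _.
    set X := (W + e) ^+ 2 ^+ 2.
    have X0 : 0 <= X by exact: sqr_ge0.
    rewrite exprMn -/X; apply: ler_wpM2r => //.
    rewrite expr2 ler_peMl //; lra.
  case: (pselect (E2 !=set0)%classic) => [ne|ne].
    exact: ge_sup.
  by rewrite sup_out // => -[].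
apply/ler_addgt0Pr => del hdel.
set D := 2 * W + 1 + del.
have D0 : 0 < D by rewrite /D; lra.
set e := del / D.
have e0 : 0 < e by rewrite /e divr_gt0.
have eD : e * D = del by rewrite /e divfK // lt0r_neq0.
have := key e e0.
have dp : (0 : R) < d%:R by rewrite ltr0n.
rewrite -(ler_pdivrMl _ _ dp) => h.
apply: le_trans h _.
have e1 : e <= 1.
  rewrite /D in eD; nra.
rewrite /D in eD.
nra.
Qed.
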